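(* Suppose $N>3$ and let $c_\star$ be any real number with $\frac{n_1\vee n_2}{N-3}\le c_\star$. Then $$\sum_{\alpha\in\Gamma_1}\mathbb E\Big[I_\alpha\sum_{\beta\in\Gamma_1}|I_\beta-J_{\beta\alpha}|\sum_{\gamma\in\Gamma_1}|I_\gamma-J_{\gamma\alpha}|\Big]\le(8c_\star+36c_\star^2)(n_1\vee n_2).$$
   Context: Degree sequence $(d_1,\dots,d_n)$, $N=\sum d_i$ even, $n_k=|\{i:d_i=k\}|$, half-edges $1..N$ with $d_i$ belonging to vertex $v_i$; $\mathfrak g$ a uniform random perfect matching. $\Gamma_{11}$ = sets $\{\{s,t\}\}$, $s\in v_i,t\in v_j$, $i<j$, $d_i=d_j=1$; $\Gamma_{12}$ = sets $\{\{s,u\},\{t,v\}\}$, $s\in v_i,t\in v_j$, $i<j$, $d_i=d_j=1$, $u\ne v\in v_k$, $d_k=2$; $\Gamma_1=\Gamma_{11}\cup\Gamma_{12}$. $I_\alpha=1$ iff all pairs of $\alpha$ lie in $\mathfrak g$. Switching coupling: for $\alpha$ with pairs $\{s_{\ell,1},s_{\ell,2}\}$, $\ell=1..e$, ordered by increasing $s_{\ell,1}\wedge s_{\ell,2}$, independent $B_{\alpha,\ell}$ uniform on $\{1..N-2(e-\ell)-1\}$ (independent of each other over all $\alpha,\ell$ and of $\mathfrak g$); if $I_\alpha=0$ then $\mathfrak g_\alpha=\mathfrak g$; if $I_\alpha=1$, starting from $g_0=\mathfrak g$, for $\ell=1..e$ let $t_{\ell,1}$ be the $B_{\alpha,\ell}$-th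 smallest element of $\{1..N\}\setminus(\{s_{\ell,1}\wedge s_{\ell,2}\}\cup\bigcup_{m>\ell}\{s_{m,1},s_{m,2}\})$, $t_{\ell,2}$ its partner in $g_{\ell-1}$, and replace in $g_{\ell-1}$ the pairs $\{s_{\ell,1},s_{\ell,2}\},\{t_{\ell,1},t_{\ell,2}\}$ by $\{s_{\ell,1}\wedge s_{\ell,2},t_{\ell,1}\},\{s_{\ell,1}\vee s_{\ell,2},t_{\ell,2}\}$ (no change if $t_{\ell,1}=s_{\ell,1}\vee s_{\ell,2}$) to get $g_\ell$; $\mathfrak g_\alpha=g_e$. $J_{\beta\alpha}=1$ iff all pairs of $\beta$ lie in $\mathfrak g_\alpha$. *)

(* Defs.v *)
From mathcomp Require Import all_boot all_order all_algebra.
Set Implicit Arguments. Unset Strict Implicit. Unset Printing Implicit Defensive.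
Import Order.TTheory GRing.Theory Num.Theory.

(* Half-edges are 'I_N = {0,...,N-1} (the paper's 1..N shifted by one);
   vertices are 'I_n; [v x] is the vertex owning half-edge x, so the degree
   sequence is d_i = #|v^-1(i)| and N = sum_i d_i. *)
Section Switching.
Variables (N n : nat) (v : 'I_N -> 'I_n).

Definition deg (i : 'I_n) : nat := #|[set x : 'I_N | v x == i]|.
Definition nk (k : nat) : nat := #|[set i : 'I_n | deg i == k]|.

(* an (unordered) pair {x,y} is stored as (min, max) *)
Definition hpair := ('I_N * 'I_N)%type.
Definition mkpair (x y : 'I_N) : hpair := if x < y then (x, y) else (y, x).

Definition Gamma11 : {set {set hpair}} :=
  [set [set mkpair st.1 st.2] | st : hpair &
     [&& deg (v st.1) == 1, deg (v st.2) == 1 & v st.1 < v st.2]].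

(* q = ((s, t), (u, w)) : pairs {s,u}, {t,w} *)
Definition Gamma12 : {set {set hpair}} :=
  [set [set mkpair q.1.1 q.2.1; mkpair q.1.2 q.2.2] | q : hpair * hpair &
     [&& deg (v q.1.1) == 1, deg (v q.1.2) == 1, v q.1.1 < v q.1.2,
         q.2.1 != q.2.2, v q.2.1 == v q.2.2 & deg (v q.2.1) == 2]].

Definition Gamma1 : {set {set hpair}} := Gamma11 :|: Gamma12.

(* perfect matchings = fixed-point-free involutions of the half-edges *)
Definition is_matching (g : {ffun 'I_N -> 'I_N}) : bool :=
  [forall x, (g (g x) == x) && (g x != x)].
Definition Mset : {set {ffun 'I_N -> 'I_N}} := [set g | is_matching g].

Definition inG (g : {ffun 'I_N -> 'I_N}) (p : hpair) : bool := g p.1 == p.2.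
Definition Ind (al : {set hpair}) (g : {ffun 'I_N -> 'I_N}) : bool :=
  [forall p in al, inG g p].

Definition sorted_pairs (al : {set hpair}) : seq hpair :=
  sort (fun p q : hpair => p.1 <= q.1) (enum al).

Definition avail (a : 'I_N) (rest : seq hpair) : seq 'I_N :=
  [seq x <- sort (fun x y : 'I_N => x <= y) (enum 'I_N) |
     (x != a) && all (fun q : hpair => (x != q.1) && (x != q.2)) rest].

(* replace {a,b},{t1,t2} by {a,t1},{b,t2} where t2 = g t1 (no change if t1=b) *)
Definition switch1 (g : {ffun 'I_N -> 'I_N}) (p : hpair) (t1 : 'I_N)
  : {ffun 'I_N -> 'I_N} :=
  if t1 == p.2 then g else
  let t2 := g t1 in
  [ffun x => if x == p.1 then t1 else if x == t1 then p.1
             else if x == p.2 then t2 else if x == t2 then p.2 else g x].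

(* bl is the 0-indexed B: t1 is the (bl+1)-th smallest element of avail *)
Fixpoint switch_all (ps : seq hpair) (bs : seq nat) (g : {ffun 'I_N -> 'I_N})
  : {ffun 'I_N -> 'I_N} :=
  match ps, bs with
  | p :: ps', bl :: bs' => switch_all ps' bs' (switch1 g p (nth p.1 (avail p.1 ps') bl))
  | _, _ => g
  end.

(* the joint values of (B_{al,1},...,B_{al,e}) (0-indexed, B_l - 1 < N-2(e-l)-1);
   uniform on this set = independent uniform B_{al,l} *)
Definition Bset (al : {set hpair}) : {set {ffun 'I_#|al| -> 'I_N}} :=
  [set b : {ffun 'I_#|al| -> 'I_N} | [forall l : 'I_#|al|, b l < N - 2 * (#|al| - l.+1) - 1]].

Definition bseq (al : {set hpair}) (b : {ffun 'I_#|al| -> 'I_N}) : seq nat :=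
  [seq val (b l) | l <- enum 'I_#|al|].

Definition g_alpha (al : {set hpair}) (g : {ffun 'I_N -> 'I_N})
  (b : {ffun 'I_#|al| -> 'I_N}) : {ffun 'I_N -> 'I_N} :=
  if Ind al g then switch_all (sorted_pairs al) (bseq b) g else g.

Definition Jba (be al : {set hpair}) (g : {ffun 'I_N -> 'I_N})
  (b : {ffun 'I_#|al| -> 'I_N}) : bool := Ind be (@g_alpha al g b).

Variable R : realFieldType.
Local Open Scope ring_scope.

(* E[ I_al * sum_be |I_be - J_{be,al}| * sum_ga |I_ga - J_{ga,al}| ],
   g uniform in Mset, B_al uniform in Bset al, independent *)
Definition Eterm (al : {set hpair}) : R :=
  (#|Mset|%:R)^-1 * (#|Bset al|%:R)^-1 *
  \sum_(g in Mset) \sum_(b in Bset al)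
     ((Ind al g)%:R *
      (\sum_(be in Gamma1) `|(Ind be g)%:R - (@Jba be al g b)%:R|) *
      (\sum_(ga in Gamma1) `|(Ind ga g)%:R - (@Jba ga al g b)%:R|)).

End Switching.

(* Main.v *)
Require Import Defs.
From mathcomp Require Import all_boot all_order all_algebra.
From mathcomp Require Import zify ring lra.
Set Implicit Arguments. Unset Strict Implicit. Unset Printing Implicit Defensive.
Import Order.TTheory GRing.Theory Num.Theory.

Section S.
Variables (N n : nat) (v : 'I_N -> 'I_n).
Implicit Types (g h : {ffun 'I_N -> 'I_N}) (p q : hpair N) (x y z : 'I_N).

Lemma mkpairC x y : mkpair x y = mkpair y x.
Proof.
rewrite /mkpair; case: (ltngtP x y) => // H.
by have -> : x = y by apply: val_inj.
Qed.

Lemma mkpair_lt x y : x != y -> (mkpair x y).1 < (mkpair x y).2.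
Proof.
move=> Hxy; rewrite /mkpair; case: (ltngtP x y) => H //=.
by case/eqP: Hxy; apply: val_inj.
Qed.

Lemma mkpair_inj x y x' y' : mkpair x y = mkpair x' y' ->
  (x = x' /\ y = y') \/ (x = y' /\ y = x').
Proof.
rewrite /mkpair; do 2 case: ifP => _; case=> H1 H2; subst; tauto.
Qed.

Lemma mkpair_ends x y : [/\ ((mkpair x y).1 == x) || ((mkpair x y).1 == y),
  ((mkpair x y).2 == x) || ((mkpair x y).2 == y) &
  ((mkpair x y).1 == x) = ((mkpair x y).2 == y) ].
Proof.
rewrite /mkpair; case: ifP => /= H; rewrite ?eqxx ?orbT //.
Qed.

Lemma pair_mk p : p.1 < p.2 -> p = mkpair p.1 p.2.
Proof. by case: p => a b /= H; rewrite /mkpair H. Qed.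

Definition matching g := forall x, g (g x) = x /\ g x != x.

Lemma matchingP g : g \in Mset N -> matching g.
Proof.
rewrite inE => /forallP H x; have /andP [/eqP -> ->] := H x; done.
Qed.

Lemma inG_mk g x y : matching g -> inG g (mkpair x y) = (g x == y).
Proof.
move=> Hg; rewrite /inG /mkpair; case: ifP => //= _.
apply/eqP/eqP => [<-|<-]; apply (Hg _).1.
Qed.

Lemma inG_mkg g x : matching g -> inG g (mkpair x (g x)).
Proof. by move=> Hg; rewrite inG_mk. Qed.


Definition deg1 x := deg v (v x) == 1.
Definition deg2 x := deg v (v x) == 2.

Lemma deg1_uniq x y : deg1 x -> v y = v x -> y = x.
Proof.
rewrite /deg1 /deg => /cards1P [z Hz] Hy.
have : x \in [set z0 | v z0 == v x] by rewrite inE.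
have : y \in [set z0 | v z0 == v x] by rewrite inE Hy.
by rewrite Hz !inE => /eqP -> /eqP ->.
Qed.

Lemma deg2_oth u w z : deg2 u -> v w = v u -> w != u -> v z = v u -> z = u \/ z = w.
Proof.
rewrite /deg2 /deg => /eqP H2 Hw Hwu Hz.
have Hs : [set u; w] = [set z0 | v z0 == v u].
  have Huw : (u != w) by rewrite eq_sym.
  apply/eqP; rewrite eqEcard H2 cards2 Huw andbT.
  by apply/subsetP => y; rewrite !inE => /orP [] /eqP ->; rewrite ?Hw eqxx.
have : z \in [set z0 | v z0 == v u] by rewrite inE Hz.
by rewrite -Hs !inE => /orP [] /eqP ->; tauto.
Qed.

Lemma deg12 x y : deg1 x -> deg2 y -> x != y.
Proof. by rewrite /deg1 /deg2 => /eqP H1; apply: contraTneq => <-; rewrite H1. Qed.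

Lemma Gamma11P be : reflect (exists s t, [/\ deg1 s, deg1 t, v s < v t & be = [set mkpair s t]])
  (be \in Gamma11 v).
Proof.
apply: (iffP imsetP) => [[st] | [s [t [H1 H2 H3 ->]]]].
  by rewrite inE => /and3P [H1 H2 H3] ->; exists st.1, st.2.
by exists (s, t) => //; rewrite inE /= H3 andbT; apply/andP.
Qed.

Lemma Gamma12P be : reflect (exists s t u w, [/\ deg1 s, deg1 t, v s < v t,
   [&& u != w, v u == v w & deg2 u] & be = [set mkpair s u; mkpair t w]])
  (be \in Gamma12 v).
Proof.
apply: (iffP imsetP) => [[q] | [s [t [u [w [H1 H2 H3 /and3P [H4 H5 H6] ->]]]]]].
  rewrite inE => /and5P [H1 H2 H3 H4 /andP [H5 H6]] ->.
  by exists q.1.1, q.1.2, q.2.1, q.2.2; split => //; apply/and3P.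
by exists ((s, t), (u, w)) => //; rewrite inE /=; apply/and5P; split => //; apply/andP.
Qed.

Lemma Gamma1_pair be p : be \in Gamma1 v -> p \in be ->
  exists x y, [/\ p = mkpair x y, x != y, deg1 x & deg1 y || deg2 y].
Proof.
rewrite inE => /orP [/Gamma11P [s [t [H1 H2 H3 ->]]] | /Gamma12P [s [t [u [w [H1 H2 H3 /and3P [H4 /eqP H5 H6] ->]]]]]].
  rewrite inE => /eqP ->; exists s, t; split => //; last by rewrite H2.
  by apply: contraTneq H3 => ->; rewrite ltnn.
rewrite !inE => /orP [] /eqP ->.
  by exists s, u; split => //; [apply: deg12 | rewrite H6 orbT].
have Hw : deg2 w by rewrite /deg2 -H5.
by exists t, w; split => //; [apply: deg12 | rewrite Hw orbT].
Qed.

Lemma Gamma1_lt be p : be \in Gamma1 v -> p \in be -> p.1 < p.2.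
Proof.
move=> Hb Hp; have [x [y [-> Hxy _ _]]] := Gamma1_pair Hb Hp; exact: mkpair_lt.
Qed.

Definition oth x := odflt x [pick y | (v y == v x) && (y != x)].

Lemma othE u w : deg2 u -> v w = v u -> w != u -> oth u = w.
Proof.
move=> H2 Hw Hwu; rewrite /oth; case: pickP => [y /andP [/eqP Hy Hyu] | /(_ w)].
  by have [Hy'|//] := deg2_oth H2 Hw Hwu Hy; rewrite Hy' eqxx in Hyu.
by rewrite Hw eqxx Hwu.
Qed.

Definition canon h p : {set hpair N} :=
  if deg1 p.1 && deg1 p.2 then [set p] else
  let d2 := if deg2 p.1 then p.1 else p.2 in
  let w := oth d2 in [set mkpair (h d2) d2; mkpair (h w) w].

Lemma canon12 h x y z : matching h -> deg1 x -> deg2 y -> v z = v y -> z != y ->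
  h x = y -> canon h (mkpair x y) = [set mkpair x y; mkpair (h z) z].
Proof.
move=> Hh H1 H2 Hz Hzy Hxy; rewrite /canon.
have Hn1 : ~~ deg1 y by move: H2; rewrite /deg1 /deg2 => /eqP ->.
have Hn2 : ~~ deg2 x by move: H1; rewrite /deg1 /deg2 => /eqP ->.
have -> : deg1 (mkpair x y).1 && deg1 (mkpair x y).2 = false.
  by rewrite /mkpair; case: (x < y) => /=; rewrite ?(negbTE Hn1) ?andbF.
have -> : (if deg2 (mkpair x y).1 then (mkpair x y).1 else (mkpair x y).2) = y.
  by rewrite /mkpair; case: (x < y) => /=; rewrite ?H2 ?(negbTE Hn2).
by cbv zeta; rewrite (othE H2 Hz Hzy) -Hxy (Hh x).1.
Qed.

Lemma IndP be h : Ind be h -> forall p, p \in be -> inG h p.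
Proof. by move=> /forall_inP. Qed.

Lemma canonP h be p : matching h -> be \in Gamma1 v -> Ind be h -> p \in be -> be = canon h p.
Proof.
move=> Hh Hb HI Hp; move: (Hb) Hp HI.
rewrite inE => /orP [/Gamma11P [s [t [H1 H2 H3 ->]]] | /Gamma12P [s [t [u [w [H1 H2 H3 /and3P [H4 /eqP H5 H6] ->]]]]]].
  rewrite inE => /eqP -> _; rewrite /canon.
  have [E1 E2 _] := mkpair_ends s t.
  by move: E1 E2 => /orP [] /eqP -> /orP [] /eqP ->; rewrite ?H1 ?H2.
move=> Hp HI.
have Hsu : inG h (mkpair s u) by apply: (IndP HI); rewrite !inE eqxx.
have Htw : inG h (mkpair t w) by apply: (IndP HI); rewrite !inE eqxx orbT.
rewrite inG_mk // in Hsu; rewrite inG_mk // in Htw.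
have Hw2 : deg2 w by rewrite /deg2 -H5.
move: Hp; rewrite !inE => /orP [] /eqP ->.
  have Hwu : w != u by rewrite eq_sym.
  rewrite (canon12 Hh H1 H6 (esym H5) Hwu (eqP Hsu)).
  by rewrite -(eqP Htw) (Hh t).1.
rewrite (canon12 Hh H2 Hw2 H5 H4 (eqP Htw)).
by rewrite -(eqP Hsu) (Hh s).1 setUC.
Qed.

Lemma Gamma1_uniq h b1 b2 p : matching h -> b1 \in Gamma1 v -> b2 \in Gamma1 v ->
  Ind b1 h -> Ind b2 h -> p \in b1 -> p \in b2 -> b1 = b2.
Proof. by move=> Hh H1 H2 I1 I2 P1 P2; rewrite (canonP Hh H1 I1 P1) (canonP Hh H2 I2 P2). Qed.

Lemma Gamma1_uw h be u w : matching h -> be \in Gamma1 v -> Ind be h ->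
  deg2 u -> v w = v u -> w != u -> mkpair u (h u) \in be ->
  mkpair w (h w) \in be /\ mkpair w (h w) != mkpair u (h u).
Proof.
move=> Hh Hb HI H2 Hw Hwu Hp.
have [x [y [E Hxy Hx Hy]]] := Gamma1_pair Hb Hp.
have Hhu : deg1 (h u).
  have := mkpair_inj E; case=> [[Ex Ey]|[Ex Ey]]; first by rewrite -Ex in Hx; move: (deg12 Hx H2); rewrite eqxx.
  by rewrite Ey.
split.
  rewrite (canonP Hh Hb HI Hp) [mkpair u (h u)]mkpairC (canon12 Hh Hhu H2 Hw Hwu ((Hh u).1)).
  by rewrite !inE [mkpair w _]mkpairC eqxx orbT.
apply/negP => /eqP /mkpair_inj [[Ewu _]|[Ewh _]]; first by rewrite Ewu eqxx in Hwu.
have Hw2 : deg2 w by rewrite /deg2 Hw.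
by move: (deg12 Hhu Hw2); rewrite Ewh eqxx.
Qed.


Lemma switch1_spec h a b c : matching h -> h a = b -> c != a -> c != b ->
  let h' := switch1 h (a, b) c in
  [/\ h' a = c, h' c = a, h' b = h c, h' (h c) = b &
      forall x, x \notin [:: a; b; c; h c] -> h' x = h x].
Proof.
move=> Hh Hab Hca Hcb /=.
have Hba : b != a by rewrite -Hab; exact: (Hh a).2.
have Hdc : h c != c by exact: (Hh c).2.
have Hda : h c != a by apply: contraNneq Hcb => E; rewrite -(Hh c).1 E Hab.
have Hdb : h c != b by apply: contraNneq Hca => E; rewrite -(Hh c).1 E -Hab (Hh a).1.
rewrite /switch1 /= (negbTE Hcb) !ffunE eqxx; split => //.
- by rewrite (negbTE Hca) eqxx.
- by rewrite (negbTE Hba) eq_sym (negbTE Hcb) eqxx.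
- by rewrite (negbTE Hda) (negbTE Hdc) (negbTE Hdb) eqxx.
- move=> x; rewrite !inE => /norP [Hxa /norP [Hxb /norP [Hxc Hxd]]].
  by rewrite ffunE (negbTE Hxa) (negbTE Hxb) (negbTE Hxc) (negbTE Hxd).
Qed.

Lemma switch1_match h a b c : matching h -> h a = b -> c != a -> c != b ->
  matching (switch1 h (a, b) c).
Proof.
move=> Hh Hab Hca Hcb.
have [E1 E2 E3 E4 E5] := switch1_spec Hh Hab Hca Hcb.
have Hba : b != a by rewrite -Hab; exact: (Hh a).2.
have Hdc : h c != c by exact: (Hh c).2.
have Hda : h c != a by apply: contraNneq Hcb => E; rewrite -(Hh c).1 E Hab.
have Hdb : h c != b by apply: contraNneq Hca => E; rewrite -(Hh c).1 E -Hab (Hh a).1.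
move=> x.
case: (eqVneq x a) => [->|Hxa]; first by rewrite E1 E2; split; rewrite // eq_sym.
case: (eqVneq x b) => [->|Hxb]; first by rewrite E3 E4; split; rewrite // eq_sym.
case: (eqVneq x c) => [->|Hxc]; first by rewrite E2 E1; split; rewrite // eq_sym.
case: (eqVneq x (h c)) => [->|Hxd]; first by rewrite E4 E3; split; rewrite // eq_sym.
have Hx : x \notin [:: a; b; c; h c].
  by rewrite !inE; apply/negP => /or4P [] /eqP E; [move: Hxa|move: Hxb|move: Hxc|move: Hxd]; rewrite E eqxx.
rewrite (E5 x Hx); split; last exact: (Hh x).2.
have Hhx : h x \notin [:: a; b; c; h c].
  rewrite !inE; apply/negP => /or4P [] /eqP E.
  - by move: Hxb; rewrite -Hab -E (Hh x).1 eqxx.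
  - by move: Hxa; rewrite -[a](Hh a).1 Hab -E (Hh x).1 eqxx.
  - by move: Hxd; rewrite -E (Hh x).1 eqxx.
  - by move: Hxc; rewrite -[c](Hh c).1 -E (Hh x).1 eqxx.
by rewrite (E5 _ Hhx) (Hh x).1.
Qed.

Definition Rem g g' := [set q : hpair N | [&& q.1 < q.2, inG g q & ~~ inG g' q]].

Lemma Rem_sub g g' x1 x2 x3 x4 : matching g ->
  (forall x, g' x != g x -> x \in [:: x1; x2; x3; x4]) -> g x1 = x2 -> g x3 = x4 ->
  Rem g g' \subset [set mkpair x1 x2; mkpair x3 x4].
Proof.
move=> Hg Hm E1 E2; apply/subsetP => -[y1 y2]; rewrite inE /= => /and3P [Hlt Hin Hnin].
rewrite /inG /= in Hin Hnin.
have Hq : (y1, y2) = mkpair y1 (g y1) by rewrite (eqP Hin); exact: (pair_mk (p := (y1, y2))).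
have : y1 \in [:: x1; x2; x3; x4].
  by apply: Hm; rewrite (eqP Hin).
rewrite Hq !inE => /or4P [] /eqP ->.
- by rewrite E1 eqxx.
- by rewrite -E1 (Hg x1).1 mkpairC eqxx.
- by rewrite E2 eqxx orbT.
- by rewrite -E2 (Hg x3).1 mkpairC eqxx orbT.
Qed.

Lemma card_le2 (T : finType) (a b : T) : #|[set a; b]| <= 2.
Proof. by rewrite cards2; case: (a != b). Qed.

Lemma Rem_le2 g g' x1 x2 x3 x4 : matching g ->
  (forall x, g' x != g x -> x \in [:: x1; x2; x3; x4]) -> g x1 = x2 -> g x3 = x4 ->
  #|Rem g g'| <= 2.
Proof. by move=> *; apply: leq_trans (card_le2 (mkpair x1 x2) (mkpair x3 x4)); apply: subset_leq_card; apply: Rem_sub. Qed.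

Lemma Rem_trans g g1 g2 : Rem g g2 \subset Rem g g1 :|: Rem g1 g2.
Proof.
apply/subsetP => q; rewrite !inE => /and3P [-> -> ->] /=.
by case: (inG g1 q).
Qed.

Lemma Rem_id g : Rem g g = set0.
Proof. by apply/setP => q; rewrite !inE andbN andbF. Qed.

Definition Fam g g' := [set be in Gamma1 v | Ind be g && ~~ Ind be g'].

Lemma FamP g g' be : be \in Fam g g' -> [/\ be \in Gamma1 v, Ind be g & ~~ Ind be g'].
Proof. by rewrite inE => /andP [-> /andP [-> ->]]. Qed.

Lemma Fam_pair g g' be : be \in Fam g g' -> exists2 q, q \in be & q \in Rem g g'.
Proof.
rewrite inE => /andP [Hb /andP [Hg /forall_inP Hg']].
have [q Hq] : exists q, ~~ ((q \in be) ==> inG g' q).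
  by apply/existsP; rewrite -negb_forall; apply/negP => /forallP H; apply: Hg' => q /(implyP (H q)).
rewrite negb_imply in Hq; case/andP: Hq => Hq Hq'.
by exists q => //; rewrite inE Hq' (Gamma1_lt Hb Hq) (IndP Hg Hq).
Qed.

Lemma Fam_le_aux g g' (d q1 q2 : hpair N) : matching g ->
  q1 \in Rem g g' -> q2 \in Rem g g' ->
  (forall be, be \in Fam g g' -> q1 \in be -> q2 \in be /\ q2 != q1) ->
  #|Fam g g'| < #|Rem g g'|.
Proof.
move=> Hg Hq1 Hq2 Hsav.
pose f (be : {set hpair N}) := odflt d [pick q in be :&: Rem g g'].
have Hf be : be \in Fam g g' -> f be \in be /\ f be \in Rem g g'.
  move=> Hb; rewrite /f; case: pickP => [q|]; first by rewrite inE => /andP [].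
  by have [q Hq Hq'] := Fam_pair Hb => /(_ q); rewrite inE Hq Hq'.
have Hinj : {in Fam g g' &, injective f}.
  move=> b1 b2 H1 H2 E; have [F1 _] := Hf _ H1; have [F2 _] := Hf _ H2.
  move: H1 H2 => /FamP [G1 I1 _] /FamP [G2 I2 _].
  by apply: (Gamma1_uniq Hg G1 G2 I1 I2 F1); rewrite E.
have [q Hq Hnq] : exists2 q, q \in Rem g g' & q \notin f @: Fam g g'.
  case: (boolP (q1 \in f @: Fam g g')) => [/imsetP [b Hb Eb] | H]; last by exists q1.
  have Hq1b : q1 \in b by rewrite Eb; exact: (Hf _ Hb).1.
  have [Hq2b Hne] := Hsav _ Hb Hq1b.
  exists q2 => //; apply/imsetP => [[b' Hb' Eb']].
  have [F' _] := Hf _ Hb'.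
  move: (Hb) (Hb') => /FamP [G1 I1 _] /FamP [G2 I2 _].
  have Ebb : b' = b by apply: (Gamma1_uniq Hg G2 G1 I2 I1 F'); rewrite -Eb'.
  by move: Hne; rewrite Eb' Ebb -Eb eqxx.
rewrite -(card_in_imset Hinj).
have Hsub : f @: Fam g g' \subset Rem g g' :\ q.
  apply/subsetP => y Hy; rewrite in_setD1; apply/andP; split.
    by apply: contraNneq Hnq => <-.
  by case/imsetP: Hy => b Hb ->; exact: (Hf _ Hb).2.
apply: leq_ltn_trans (subset_leq_card Hsub) _.
by rewrite (cardsD1 q (Rem g g')) Hq.
Qed.

Lemma Fam_le g g' : matching g -> #|Fam g g'| <= #|Rem g g'|.
Proof.
move=> Hg; case: (set_0Vmem (Fam g g')) => [->|[b Hb]]; first by rewrite cards0.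
have [d _ Hd] := Fam_pair Hb.
pose f (be : {set hpair N}) := odflt d [pick q in be :&: Rem g g'].
have Hf be : be \in Fam g g' -> f be \in be /\ f be \in Rem g g'.
  move=> Hb'; rewrite /f; case: pickP => [q|]; first by rewrite inE => /andP [].
  by have [q Hq Hq'] := Fam_pair Hb' => /(_ q); rewrite inE Hq Hq'.
have Hinj : {in Fam g g' &, injective f}.
  move=> b1 b2 H1 H2 E; have [F1 _] := Hf _ H1; have [F2 _] := Hf _ H2.
  move: H1 H2 => /FamP [G1 I1 _] /FamP [G2 I2 _].
  by apply: (Gamma1_uniq Hg G1 G2 I1 I2 F1); rewrite E.
rewrite -(card_in_imset Hinj); apply: subset_leq_card.
by apply/subsetP => y /imsetP [b' Hb' ->]; exact: (Hf _ Hb').2.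
Qed.


Lemma switch1_triv h a b : switch1 h (a, b) b = h.
Proof. by rewrite /switch1 /= eqxx. Qed.

Lemma moved_sub h h' a b c : (forall x, x \notin [:: a; b; c; h c] -> h' x = h x) ->
  forall x, h' x != h x -> x \in [:: a; b; c; h c].
Proof. by move=> H x; apply: contraR => /H ->; rewrite eqxx. Qed.

Lemma step_props h a b c : matching h -> h a = b -> c != a ->
  [/\ matching (switch1 h (a, b) c), #|Rem h (switch1 h (a, b) c)| <= 2
    & #|Rem (switch1 h (a, b) c) h| <= 2].
Proof.
move=> Hh Hab Hca; case: (eqVneq c b) => [->|Hcb].
  by rewrite switch1_triv Rem_id cards0.
have Hm := switch1_match Hh Hab Hca Hcb.
have [E1 E2 E3 E4 E5] := switch1_spec Hh Hab Hca Hcb.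
split => //.
  exact: (Rem_le2 (x1 := a) (x2 := b) (x3 := c) (x4 := h c) Hh (moved_sub E5)).
apply: (Rem_le2 (x1 := a) (x2 := c) (x3 := b) (x4 := h c) Hm) => // x Hx.
have := moved_sub E5 (x := x); rewrite eq_sym => /(_ Hx).
by rewrite !inE => /or4P [] ->; rewrite ?orbT.
Qed.

Lemma card_RemU g g1 g2 : #|Rem g g2| <= #|Rem g g1| + #|Rem g1 g2|.
Proof. by apply: leq_trans (subset_leq_card (Rem_trans g g1 g2)) (leq_card_setU _ _). Qed.

Lemma two_moved g a1 b1 a2 b2 c1 c2 : matching g -> g a1 = b1 -> g a2 = b2 ->
  a1 != a2 -> a1 != b2 -> b1 != a2 -> b1 != b2 -> c1 \notin [:: a1; b1; a2; b2] -> c2 != a2 -> c2 != b2 ->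
  let g1 := switch1 g (a1, b1) c1 in
  [/\ matching g1, g1 a2 = b2 &
  forall x, x \in [:: a1; b1; a2; b2] -> switch1 g1 (a2, b2) c2 x != g x].
Proof.
move=> Hg E1 E2 Ha1a2 Ha1b2 Hb1a2 Hb1b2 Hc1 Hc2a Hc2b /=.
move: Hc1; rewrite !inE => /norP [Hc1a1 /norP [Hc1b1 /norP [Hc1a2 Hc1b2]]].
have [F1 F2 F3 F4 F5] := switch1_spec Hg E1 Hc1a1 Hc1b1.
have Hg1 := switch1_match Hg E1 Hc1a1 Hc1b1.
set g1 := switch1 g (a1, b1) c1 in F1 F2 F3 F4 F5 Hg1 *.
have Hgc1 : g c1 \notin [:: a1; b1; a2; b2].
  rewrite !inE; apply/negP => /or4P [] /eqP E.
  - by move: Hc1b1; rewrite -E1 -E (Hg c1).1 eqxx.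
  - by move: Hc1a1; rewrite -[a1](Hg a1).1 E1 -E (Hg c1).1 eqxx.
  - by move: Hc1b2; rewrite -E2 -E (Hg c1).1 eqxx.
  - by move: Hc1a2; rewrite -[a2](Hg a2).1 E2 -E (Hg c1).1 eqxx.
have G2 : g1 a2 = b2.
  rewrite F5 //; rewrite !inE; apply/negP => /or4P [] /eqP E.
  - by rewrite E eqxx in Ha1a2.
  - by rewrite E eqxx in Hb1a2.
  - by rewrite E eqxx in Hc1a2.
  - by move: Hgc1; rewrite -E !inE eqxx !orbT.
split => //.
have [H1 H2 H3 H4 H5] := switch1_spec Hg1 G2 Hc2a Hc2b.
have Hg1b2 : g1 b2 = a2 by rewrite -G2 (Hg1 a2).1.
move=> x; rewrite !inE => /or4P [] /eqP ->.
- case: (eqVneq a1 c2) => [E|N1].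
    by rewrite {1}E H2 E1 eq_sym.
  case: (eqVneq a1 (g1 c2)) => [E|N2].
    by rewrite {1}E H4 E1 eq_sym.
  rewrite H5; first by rewrite F1 E1.
  by rewrite !inE negb_or Ha1a2 negb_or Ha1b2 negb_or N1 N2.
- have Gb1 : g b1 = a1 by rewrite -E1 (Hg a1).1.
  case: (eqVneq b1 c2) => [E|N1].
    by rewrite {1}E H2 Gb1 eq_sym.
  case: (eqVneq b1 (g1 c2)) => [E|N2].
    by rewrite {1}E H4 Gb1 eq_sym.
  rewrite H5; last by rewrite !inE negb_or Hb1a2 negb_or Hb1b2 negb_or N1 N2.
  rewrite F3 Gb1; apply: contraNneq Hc1b1 => E.
  by rewrite -[c1](Hg c1).1 E E1.
- by rewrite H1 E2.
- have Gb2 : g b2 = a2 by rewrite -E2 (Hg a2).1.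
  rewrite H3 Gb2; apply: contraNneq Hc2b => E.
  by rewrite -[c2](Hg1 c2).1 E G2.
Qed.


Lemma sorted_spec (al : {set hpair N}) :
  [/\ size (sorted_pairs al) = #|al|, uniq (sorted_pairs al) &
      forall z : hpair N, (z \in sorted_pairs al) = (z \in al)].
Proof.
have Hp : perm_eq (sorted_pairs al) (enum al) by rewrite /sorted_pairs perm_sort perm_refl.
split.
- by rewrite (perm_size Hp) cardE.
- by rewrite (perm_uniq Hp) enum_uniq.
- by move=> z; rewrite (perm_mem Hp) mem_enum.
Qed.

Lemma mem_avail a rest x : (x \in avail a rest) =
  (x != a) && all (fun q : hpair N => (x != q.1) && (x != q.2)) rest.
Proof. by rewrite /avail mem_filter mem_sort mem_enum andbT. Qed.

Lemma size_avail_aux a (L : seq 'I_N) rest :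
  (forall x, x \notin avail a rest -> x \in L) -> N <= size (avail a rest) + size L.
Proof.
move=> HL.
set s := sort (fun x y : 'I_N => x <= y) (enum 'I_N).
set P := fun x : 'I_N => (x != a) && all (fun q : hpair N => (x != q.1) && (x != q.2)) rest.
have Hs : size s = N by rewrite size_sort size_enum_ord.
have Hu : uniq s by rewrite sort_uniq enum_uniq.
have E : size (avail a rest) = count P s by rewrite /avail size_filter.
rewrite -{1}Hs -(count_predC P s) E leq_add2l -size_filter.
apply: uniq_leq_size; first exact: filter_uniq.
move=> x; rewrite mem_filter => /andP [Hx _]; apply: HL.
by rewrite mem_avail.
Qed.

Lemma size_avail0 a : N - 1 <= size (avail a (@nil (hpair N))).
Proof.
have := @size_avail_aux a [:: a] (@nil (hpair N)).
rewrite /= => H; rewrite leq_subLR addnC; apply: H => x.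
by rewrite mem_avail /= andbT negbK inE.
Qed.

Lemma size_avail1 a q : N - 3 <= size (avail a [:: q]).
Proof.
have := @size_avail_aux a [:: a; q.1; q.2] [:: q].
rewrite /= => H; rewrite leq_subLR addnC; apply: H => x.
rewrite mem_avail /= andbT !inE.
by case: (x == a); case: (x == q.1); case: (x == q.2).
Qed.

Lemma nth_avail a (rest : seq (hpair N)) k : k < size (avail a rest) -> nth a (avail a rest) k \in avail a rest.
Proof. exact: mem_nth. Qed.

Lemma bseq_spec (al : {set hpair N}) b : b \in Bset al ->
  size (Defs.bseq b) = #|al| /\
  forall i, i < #|al| -> nth 0 (Defs.bseq b) i < N - 2 * (#|al| - i.+1) - 1.
Proof.
rewrite inE => /forallP Hb; split; first by rewrite /Defs.bseq size_map size_enum_ord.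
move=> i Hi; rewrite /Defs.bseq (nth_map (Ordinal Hi)) ?size_enum_ord //.
have -> : nth (Ordinal Hi) (enum 'I_#|al|) i = Ordinal Hi by apply: val_inj; rewrite /= nth_enum_ord.
exact: (Hb (Ordinal Hi)).
Qed.


Lemma e1_bound g a b c : matching g -> g a = b -> c != a ->
  #|Fam g (switch1 g (a, b) c)| + #|Fam (switch1 g (a, b) c) g| <= 4.
Proof.
move=> Hg E Hc; have [Hm R1 R2] := step_props Hg E Hc.
exact: (leq_add (leq_trans (Fam_le _ Hg) R1) (leq_trans (Fam_le _ Hm) R2)).
Qed.

Lemma e2_bound g al a1 b1 a2 b2 c1 c2 u w :
  matching g -> al \in Gamma1 v -> Ind al g -> (a1, b1) \in al -> (a2, b2) \in al ->
  a1 != a2 -> a1 != b2 -> b1 != a2 -> b1 != b2 ->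
  c1 != a1 -> c1 != a2 -> c1 != b2 -> c2 != a2 ->
  deg2 u -> v w = v u -> w != u -> u \in [:: a1; b1; a2; b2] -> w \in [:: a1; b1; a2; b2] ->
  #|Fam g (switch1 (switch1 g (a1, b1) c1) (a2, b2) c2)| +
  #|Fam (switch1 (switch1 g (a1, b1) c1) (a2, b2) c2) g| <= 6.
Proof.
move=> Hg Hal HI Hx Hy Ha1a2 Ha1b2 Hb1a2 Hb1b2 Hc1a1 Hc1a2 Hc1b2 Hc2a Hu2 Hw Hwu Hu Hwm.
have E1 : g a1 = b1 by exact: (eqP (IndP HI Hx)).
have E2 : g a2 = b2 by exact: (eqP (IndP HI Hy)).
case: (eqVneq c1 b1) => [->|Hc1b1].
  rewrite switch1_triv; apply: leq_trans (e1_bound Hg E2 Hc2a) _; done.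
case: (eqVneq c2 b2) => [->|Hc2b2].
  rewrite switch1_triv; apply: leq_trans (e1_bound Hg E1 Hc1a1) _; done.
have Hc1 : c1 \notin [:: a1; b1; a2; b2].
  by rewrite !inE; apply/negP => /or4P [] /eqP E; [move: Hc1a1|move: Hc1b1|move: Hc1a2|move: Hc1b2]; rewrite E eqxx.
have [Hg1 G2 Hmv] := two_moved Hg E1 E2 Ha1a2 Ha1b2 Hb1a2 Hb1b2 Hc1 Hc2a Hc2b2.
have [_ R1 R1'] := step_props Hg E1 Hc1a1.
have [Hg2 R2 R2'] := step_props Hg1 G2 Hc2a.
set g1 := switch1 g (a1, b1) c1 in Hg1 G2 Hmv R1 R1' Hg2 R2 R2' *.
set g2 := switch1 g1 (a2, b2) c2 in Hmv Hg2 R2 R2' *.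
have A : #|Fam g g2| <= 3.
  have : #|Fam g g2| < #|Rem g g2|.
    apply: (@Fam_le_aux _ _ (a1, b1) (a1, b1) (a2, b2)) => //.
    - rewrite inE /= (Gamma1_lt Hal Hx) /inG /= E1 eqxx /=.
      by have := Hmv a1; rewrite !inE eqxx E1 => /(_ isT).
    - rewrite inE /= (Gamma1_lt Hal Hy) /inG /= E2 eqxx /=.
      by have := Hmv a2; rewrite !inE eqxx E2 !orbT => /(_ isT).
    - move=> be Hbe Hq; have [Gb Ib _] := FamP Hbe.
      rewrite (Gamma1_uniq Hg Gb Hal Ib HI Hq Hx); split => //.
      by apply/negP => /eqP [E _]; rewrite E eqxx in Ha1a2.
  by move=> H; have := leq_trans H (leq_trans (card_RemU g g1 g2) (leq_add R1 R2)).
have B : #|Fam g2 g| <= 3.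
  have Hrem z : z \in [:: a1; b1; a2; b2] -> mkpair z (g2 z) \in Rem g2 g.
    move=> Hz; rewrite inE mkpair_lt; last by rewrite eq_sym; exact: (Hg2 z).2.
    rewrite inG_mkg // inG_mk // eq_sym; exact: Hmv.
  have : #|Fam g2 g| < #|Rem g2 g|.
    apply: (@Fam_le_aux _ _ (mkpair u (g2 u)) (mkpair u (g2 u)) (mkpair w (g2 w))) => //.
    - exact: Hrem.
    - exact: Hrem.
    - move=> be Hbe Hq; have [Gb Ib _] := FamP Hbe.
      exact: (Gamma1_uw Hg2 Gb Ib Hu2 Hw Hwu Hq).
  by move=> H; have := leq_trans H (leq_trans (card_RemU g2 g1 g) (leq_add R2' R1')).
by apply: leq_trans (leq_add A B) _.
Qed.

Lemma ends12 (s u t w : 'I_N) : s != t -> s != w -> u != t -> u != w ->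
  [/\ (mkpair s u).1 != (mkpair t w).1, (mkpair s u).1 != (mkpair t w).2,
      (mkpair s u).2 != (mkpair t w).1 & (mkpair s u).2 != (mkpair t w).2].
Proof.
move=> H1 H2 H3 H4; rewrite /mkpair.
by case: (s < u); case: (t < w) => /=; split => //; rewrite eq_sym.
Qed.

Lemma mem_ends x y : x \in [:: (mkpair x y).1; (mkpair x y).2] /\
  y \in [:: (mkpair x y).1; (mkpair x y).2].
Proof. by rewrite /mkpair; case: (x < y); rewrite /= !inE !eqxx ?orbT. Qed.


Lemma F_bound11 al g b : al \in Gamma11 v -> matching g -> Ind al g -> b \in Bset al ->
  #|Fam g (@g_alpha _ al g b)| + #|Fam (@g_alpha _ al g b) g| <= 4.
Proof.
move=> /Gamma11P [s [t [H1 H2 H3 Eal]]] Hg HI Hb.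
rewrite /g_alpha HI.
have [Ss Su Sm] := sorted_spec al.
have [Bs Bn] := bseq_spec Hb.
have Hc : #|al| = 1 by rewrite Eal cards1.
rewrite Hc in Ss Bs Bn.
have HP : sorted_pairs al = [:: mkpair s t].
  move: Ss Sm; case: (sorted_pairs al) => [|z [|? ?]] //= _ Sm.
  by have := Sm z; rewrite inE eqxx Eal inE => /esym /eqP ->.
have Hk := Bn 0 isT; rewrite subnn muln0 subn0 in Hk.
move: Bs Hk; case: (Defs.bseq b) => [|k [|? ?]] //= _ Hk.
have HPin : mkpair s t \in al by rewrite Eal inE.
rewrite HP; move: (mkpair s t) HPin => [a0 b0] HPin /=.
set c := nth a0 (avail a0 [::]) k.
have Hcm : c \in avail a0 [::] by apply: nth_avail; apply: leq_trans Hk (size_avail0 _).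
rewrite mem_avail /= andbT in Hcm.
have E : g a0 = b0 by exact: (eqP (IndP HI HPin)).
exact: e1_bound.
Qed.

Lemma F_bound12 al g b : al \in Gamma12 v -> matching g -> Ind al g -> b \in Bset al ->
  #|Fam g (@g_alpha _ al g b)| + #|Fam (@g_alpha _ al g b) g| <= 6.
Proof.
move=> Hal12 Hg HI Hb.
have Hal : al \in Gamma1 v by rewrite inE Hal12 orbT.
move: Hal12 => /Gamma12P [s [t [u [w [H1 H2 H3 /and3P [Huw /eqP Hvuw Hu2] Eal]]]]].
have Hvwu : v w = v u by rewrite Hvuw.
have Hst : s != t by apply: contraTneq H3 => ->; rewrite ltnn.
have Hw2 : deg2 w by rewrite /deg2 -Hvuw.
have Hsu := deg12 H1 Hu2; have Hsw := deg12 H1 Hw2.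
have Htu := deg12 H2 Hu2; have Htw := deg12 H2 Hw2.
have Hut : u != t by rewrite eq_sym.
have Hws : w != s by rewrite eq_sym.
have Hwt : w != t by rewrite eq_sym.
have Hwu : w != u by rewrite eq_sym.
have Hts : t != s by rewrite eq_sym.
set P := mkpair s u; set Q := mkpair t w.
have HPQ : P != Q.
  have [D1 _ _ _] := ends12 Hst Hsw Hut Huw.
  by apply: contraNneq D1 => E; rewrite -/P -/Q E.
rewrite /g_alpha HI.
have [Ss Su Sm] := sorted_spec al.
have [Bs Bn] := bseq_spec Hb.
have Hc : #|al| = 2 by rewrite Eal cards2 HPQ.
rewrite Hc in Ss Bs Bn.
have Hk0 := Bn 0 isT; have Hk1 := Bn 1 isT.
rewrite /= subnn muln0 subn0 in Hk1.
rewrite /= muln1 in Hk0.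
move: Bs Hk0 Hk1; case: (Defs.bseq b) => [|k0 [|k1 [|? ?]]] //= _ Hk0 Hk1.
move: Ss Su Sm; case: (sorted_pairs al) => [|x [|y [|? ?]]] //= _.
rewrite inE andbT => Hxy Sm.
have Hx : x \in al by rewrite -Sm inE eqxx.
have Hy : y \in al by rewrite -Sm !inE eqxx orbT.
have : (x == P) && (y == Q) || (x == Q) && (y == P).
  move: Hx Hy; rewrite Eal !inE => /orP [] /eqP Ex /orP [] /eqP Ey;
  rewrite Ex Ey ?eqxx ?orbT //; by move: Hxy; rewrite Ex Ey eqxx.
move: x y Hx Hy Hxy Sm => [a1 b1] [a2 b2] Hx Hy Hxy Sm HC /=.
set c1 := nth a1 (avail a1 [:: (a2, b2)]) k0.
set c2 := nth a2 (avail a2 [::]) k1.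
have Hc1 : c1 \in avail a1 [:: (a2, b2)].
  apply: nth_avail; apply: leq_trans (size_avail1 _ _); by move: Hk0; rewrite -subnDA.
have Hc2 : c2 \in avail a2 [::] by apply: nth_avail; apply: leq_trans Hk1 (size_avail0 _).
rewrite mem_avail /= andbT in Hc1; rewrite mem_avail /= andbT in Hc2.
move: Hc1 => /and3P [Hc1a1 Hc1a2 Hc1b2].
have [Mu1 Mu2] := mem_ends s u; have [Mw1 Mw2] := mem_ends t w.
case/orP: HC => /andP [/eqP Ex /eqP Ey].
- have [D1 D2 D3 D4] := ends12 Hst Hsw Hut Huw.
  rewrite -/P -/Q -Ex -Ey /= in D1 D2 D3 D4 Mu2 Mw2.
  apply: (e2_bound (al := al) (u := u) (w := w)) => //.
  + by move: Mu2; rewrite !inE; case/orP => ->; rewrite ?orbT.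
  + by move: Mw2; rewrite !inE; case/orP => ->; rewrite ?orbT.
- have [D1 D2 D3 D4] := ends12 Hts Htu Hws Hwu.
  rewrite -/P -/Q -Ex -Ey /= in D1 D2 D3 D4 Mu2 Mw2.
  apply: (e2_bound (al := al) (u := u) (w := w)) => //.
  + by move: Mu2; rewrite !inE; case/orP => ->; rewrite ?orbT.
  + by move: Mw2; rewrite !inE; case/orP => ->; rewrite ?orbT.
Qed.


Definition sw (y y' x : 'I_N) : 'I_N := if x == y then y' else if x == y' then y else x.

Lemma swK y y' x : sw y y' (sw y y' x) = x.
Proof.
rewrite /sw; case: (eqVneq x y) => [->|Hxy].
  by rewrite eqxx; case: (eqVneq y' y) => [->|_]; rewrite ?eqxx.
case: (eqVneq x y') => [->|Hxy']; first by rewrite eqxx.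
by rewrite (negbTE Hxy) (negbTE Hxy').
Qed.

Lemma swL y y' : sw y y' y = y'.
Proof. by rewrite /sw eqxx. Qed.

Lemma swD y y' x : x != y -> x != y' -> sw y y' x = x.
Proof. by rewrite /sw => /negbTE -> /negbTE ->. Qed.

Definition conjt y y' g : {ffun 'I_N -> 'I_N} := [ffun x => sw y y' (g (sw y y' x))].

Lemma conjtK y y' g : conjt y y' (conjt y y' g) = g.
Proof. by apply/ffunP => x; rewrite !ffunE !swK. Qed.

Lemma conjt_M y y' g : g \in Mset N -> conjt y y' g \in Mset N.
Proof.
move=> /matchingP Hg; rewrite inE; apply/forallP => x; rewrite /conjt !ffunE swK (Hg _).1 swK eqxx /=.
apply: contraNneq (Hg (sw y y' x)).2 => E.
by apply/eqP; have := congr1 (sw y y') E; rewrite swK.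
Qed.

Lemma fiber_le (A : {set {ffun 'I_N -> 'I_N}}) z y y' :
  (forall g, g \in A -> conjt y y' g \in A) -> z != y -> z != y' ->
  #|[set g in A | g z == y]| <= #|[set g in A | g z == y']|.
Proof.
move=> HA Hzy Hzy'.
have Hinj : injective (conjt y y') by apply: (can_inj (conjtK y y')).
rewrite -(card_imset _ Hinj); apply: subset_leq_card; apply/subsetP => g' /imsetP [g].
rewrite !inE => /andP [Hg /eqP Hgz] ->; apply/andP; split; first exact: HA.
by rewrite /conjt ffunE (swD Hzy Hzy') Hgz swL.
Qed.

Lemma sw_sym y y' x : sw y y' x = sw y' y x.
Proof.
rewrite /sw; case: (eqVneq x y) => Hxy; case: (eqVneq x y') => Hxy' //.
by rewrite -Hxy -Hxy'.
Qed.

Lemma conjt_sym y y' g : conjt y y' g = conjt y' y g.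
Proof. by apply/ffunP => x; rewrite !ffunE !(sw_sym y y'). Qed.

Lemma fiber_count (A : {set {ffun 'I_N -> 'I_N}}) z (V : {set 'I_N}) y0 :
  y0 \in V -> (forall g, g \in A -> g z \in V) ->
  (forall y, y \in V -> forall g, g \in A -> conjt y y0 g \in A) ->
  z \notin V ->
  #|A| = #|V| * #|[set g in A | g z == y0]|.
Proof.
move=> Hy0 HV Hc Hz.
have Hfib y : y \in V -> #|[set g in A | g z == y]| = #|[set g in A | g z == y0]|.
  move=> Hy; have Hzy : z != y by apply: contraNneq Hz => ->.
  have Hzy0 : z != y0 by apply: contraNneq Hz => ->.
  have L1 := fiber_le (A := A) (Hc y Hy) Hzy Hzy0.
  have L2 : #|[set g in A | g z == y0]| <= #|[set g in A | g z == y]|.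
    by apply: fiber_le => // g Hg; rewrite conjt_sym; exact: Hc.
  by apply/eqP; rewrite eqn_leq L1 L2.
rewrite -sum1_card (partition_big (fun g => g z) (mem V)) /=; last by move=> g; apply: HV.
rewrite -sum_nat_const; apply: eq_bigr => y Hy.
rewrite -(Hfib y Hy) -sum1_card; apply: eq_bigl => g; rewrite !inE.
by [].
Qed.


Lemma count11 s t : s != t -> #|Mset N| = (N - 1) * #|[set g in Mset N | g s == t]|.
Proof.
move=> Hst.
rewrite (@fiber_count (Mset N) s [set~ s] t).
- by rewrite cardsC1 card_ord subn1.
- by rewrite !inE eq_sym.
- by move=> g /matchingP Hg; rewrite !inE (Hg s).2.
- by move=> y _ g Hg; apply: conjt_M.
- by rewrite !inE eqxx.
Qed.

Lemma in3C x s u t : (x \in ~: [set s; u; t]) = [&& x != s, x != u & x != t].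
Proof. by rewrite !inE; case: (x == s); case: (x == u); case: (x == t). Qed.

Lemma count12 s u t w : s != u -> s != t -> s != w -> u != t -> u != w -> t != w ->
  #|Mset N| = (N - 1) * (N - 3) * #|[set g in Mset N | (g s == u) && (g t == w)]|.
Proof.
move=> Hsu Hst Hsw Hut Huw Htw.
rewrite (count11 Hsu) -mulnA; congr (_ * _).
set A := [set g in Mset N | g s == u].
rewrite (@fiber_count A t (~: [set s; u; t]) w).
- congr (_ * _).
    rewrite cardsCs setCK card_ord; congr (_ - _).
    by rewrite setUC cardsU1 cards2 Hsu !inE negb_or (eq_sym t s) Hst (eq_sym t u) Hut.
  by apply: eq_card => g; rewrite !inE andbA.
- by rewrite in3C (eq_sym w) Hsw (eq_sym w) Huw (eq_sym w) Htw.
- move=> g; rewrite inE => /andP [/matchingP Hg /eqP Hgs].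
  rewrite in3C; apply/and3P; split.
  + apply: contraNneq Hut => E; by rewrite -Hgs -E (Hg t).1.
  + apply: contraNneq Hst => E; by rewrite -[t](Hg t).1 E -Hgs (Hg s).1.
  + exact: (Hg t).2.
- move=> y; rewrite in3C => /and3P [Hys Hyu Hyt] g.
  rewrite inE => /andP [Hg /eqP Hgs]; rewrite inE conjt_M //=.
  have Es : sw y w s = s by apply: swD => //; rewrite eq_sym.
  have Eu : sw y w u = u by apply: swD => //; rewrite eq_sym.
  by rewrite /conjt ffunE Es Hgs Eu.
- by rewrite in3C eqxx !andbF.
Qed.

End S.

Section T.
Variables (N n : nat) (v : 'I_N -> 'I_n) (R : realFieldType).
Local Open Scope ring_scope.

Lemma sum_bool (T : finType) (A : {set T}) (P : pred T) :
  \sum_(i in A) ((P i)%:R : R) = (#|[set i in A | P i]|)%:R.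
Proof.
rewrite -sum1_card natr_sum big_mkcond [RHS]big_mkcond /=.
by apply: eq_bigr => i _; rewrite inE; case: (i \in A); case: (P i).
Qed.

Lemma abs_bool (x y : bool) : `|(x%:R : R) - y%:R| = (x != y)%:R.
Proof. by case: x; case: y; rewrite /= ?subrr ?normr0 ?subr0 ?sub0r ?normrN ?normr1. Qed.

Lemma S1_le (al : {set hpair N}) g b (K : nat) :
  (#|Fam v g (g_alpha g b)| + #|Fam v (g_alpha g b) g| <= K)%N ->
  \sum_(be in Gamma1 v) `|(Ind be g)%:R - (@Jba N be al g b)%:R| <= (K%:R : R).
Proof.
move=> HK.
rewrite (eq_bigr (fun be => ((Ind be g != Jba be g b) : bool)%:R)); last by move=> be _; rewrite abs_bool.
rewrite sum_bool ler_nat; apply: leq_trans HK; apply: leq_trans (leq_card_setU _ _).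
apply: subset_leq_card; apply/subsetP => be; rewrite inE => /andP [Hb].
rewrite /Jba in_setU /Fam !in_set; move: Hb; rewrite ?inE.
by case: (be \in Gamma11 v); case: (be \in Gamma12 v); case: (Ind be g); case: (Ind be _).
Qed.

Lemma Eterm_le (al : {set hpair N}) (K : nat) :
  (forall g b, g \in Mset N -> Ind al g -> b \in Bset al ->
     (#|Fam v g (g_alpha g b)| + #|Fam v (g_alpha g b) g| <= K)%N) ->
  Eterm v R al <= (#|Mset N|%:R)^-1 * ((K * K)%:R * (#|[set g in Mset N | Ind al g]|)%:R).
Proof.
move=> HK; rewrite /Eterm.
set M := Mset N; set B := Bset al.
have S0 g b : 0 <= \sum_(be in Gamma1 v) `|(Ind be g)%:R - (@Jba N be al g b)%:R| :> R.
  by apply: sumr_ge0 => be _; exact: normr_ge0.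
have Hterm g b : g \in M -> b \in B ->
   (Ind al g)%:R * (\sum_(be in Gamma1 v) `|(Ind be g)%:R - (@Jba N be al g b)%:R|) *
   (\sum_(be in Gamma1 v) `|(Ind be g)%:R - (@Jba N be al g b)%:R|)
   <= (Ind al g)%:R * (K * K)%:R :> R.
  move=> Hg Hb; case HI: (Ind al g); last by rewrite !mul0r.
  rewrite !mul1r natrM; apply: ler_pM => //; exact: S1_le (HK g b Hg HI Hb).
have Hsum : \sum_(g in M) \sum_(b in B)
   ((Ind al g)%:R * (\sum_(be in Gamma1 v) `|(Ind be g)%:R - (@Jba N be al g b)%:R|) *
   (\sum_(be in Gamma1 v) `|(Ind be g)%:R - (@Jba N be al g b)%:R|))
   <= (#|B|%:R * ((K * K)%:R * (#|[set g in M | Ind al g]|)%:R)) :> R.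
  apply: le_trans (ler_sum _ (fun g Hg => ler_sum _ (fun b Hb => Hterm g b Hg Hb))) _.
  under eq_bigr do rewrite sumr_const.
  rewrite sumrMnl -[_ *+ #|B|]mulr_natl; apply: ler_wpM2l => //.
  by rewrite -mulr_suml sum_bool mulrC.
set X := (K * K)%:R * _.
have X0 : 0 <= X by rewrite mulr_ge0.
rewrite -mulrA; apply: ler_wpM2l; first by rewrite invr_ge0.
case: (posnP #|B|) => [E|Hpos].
  by rewrite E invr0 mul0r.
apply: le_trans (ler_wpM2l _ Hsum) _; first by rewrite invr_ge0.
by rewrite mulKf // pnatr_eq0 -lt0n.
Qed.

End T.

Section C.
Variables (N n : nat) (v : 'I_N -> 'I_n).
Implicit Types (x y : 'I_N).

Definition D1 := [set x : 'I_N | deg1 v x].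
Definition D2 := [set x : 'I_N | deg2 v x].
Definition Dlt := [set st : hpair N | [&& deg1 v st.1, deg1 v st.2 & v st.1 < v st.2]].
Definition Dgt := [set st : hpair N | [&& deg1 v st.1, deg1 v st.2 & v st.2 < v st.1]].
Definition Uset := [set q : hpair N | [&& q.1 != q.2, v q.1 == v q.2 & deg2 v q.1]].

Lemma card_D1 : #|D1| <= nk v 1.
Proof.
have Hinj : {in D1 &, injective v}.
  by move=> x y; rewrite !inE => Hx Hy E; apply: esym; apply: (deg1_uniq Hx).
rewrite -(card_in_imset Hinj); apply: subset_leq_card; apply/subsetP => i /imsetP [x].
by rewrite !inE => Hx ->.
Qed.

Lemma card_D2 : #|D2| <= 2 * nk v 2.
Proof.
rewrite -sum1_card (partition_big v (mem [set i : 'I_n | deg v i == 2])) /=; last first.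
  by move=> x; rewrite !inE.
rewrite /nk -sum1_card big_distrr /= leq_sum // => i; rewrite inE => /eqP Hi.
rewrite muln1 -Hi /deg sum1dep_card; apply: subset_leq_card; apply/subsetP => x.
by rewrite !inE => /andP [].
Qed.



Lemma card_Dlt : 2 * #|Dlt| <= nk v 1 ^ 2.
Proof.
have Hsw : #|Dgt| = #|Dlt|.
  have Hinj : injective (fun st : hpair N => (st.2, st.1)) by move=> [a b] [c d] /= [-> ->].
  rewrite -(card_imset _ Hinj); apply: eq_card => st; rewrite !inE.
  apply/imsetP/idP => [[[a b]] | H]; first by rewrite inE => /and3P [H1 H2 H3] ->; rewrite /= H1 H2.
  exists (st.2, st.1); last by case: st {H}.
  by move: H; rewrite !inE /= => /and3P [-> -> ->].
have Hdisj : [disjoint Dlt & Dgt].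
  apply/pred0P => st; rewrite /= !inE.
  by case: (ltngtP (v st.1) (v st.2)); rewrite !andbF.
have HU : #|Dlt| + #|Dgt| = #|Dlt :|: Dgt|.
  by rewrite -cardsUI; move: Hdisj; rewrite -setI_eq0 => /eqP ->; rewrite cards0 addn0.
rewrite mul2n -addnn -{2}Hsw HU.
apply: leq_trans (_ : #|setX D1 D1| <= _).
  apply: subset_leq_card; apply/subsetP => st; rewrite !inE.
  by case/orP => /and3P [-> -> _].
by rewrite cardsX expnS expn1 leq_mul // card_D1.
Qed.

Lemma card_G11 : 2 * #|Gamma11 v| <= nk v 1 ^ 2.
Proof.
apply: leq_trans card_Dlt; rewrite leq_mul2l /=.
apply: leq_trans (leq_imset_card _ _) _; apply: subset_leq_card.
by apply/subsetP => st; rewrite !inE.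
Qed.

Lemma card_U : #|Uset| <= 2 * nk v 2.
Proof.
apply: leq_trans (card_D2).
have Hinj : {in Uset &, injective (fun q : hpair N => q.1)}.
  move=> [a b] [c d]; rewrite !inE /= => /and3P [Hab /eqP Hvab Ha] /and3P [Hcd /eqP Hvcd Hc] Eac.
  subst c; congr (_, _).
  have Hba : b != a by rewrite eq_sym.
  have [E|//] := deg2_oth Ha (esym Hvab) Hba (esym Hvcd).
  by rewrite E eqxx in Hcd.
rewrite -(card_in_imset Hinj); apply: subset_leq_card; apply/subsetP => x /imsetP [q].
by rewrite !inE => /and3P [_ _ H] ->.
Qed.

Lemma card_G12 : #|Gamma12 v| <= nk v 1 ^ 2 * nk v 2.
Proof.
have H1 : #|Gamma12 v| <= #|Dlt| * #|Uset|.
  apply: leq_trans (leq_imset_card _ _) _; rewrite -cardsX; apply: subset_leq_card.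
  apply/subsetP => q; rewrite !inE /deg1 /deg2 => /and5P [-> -> -> -> /andP [-> ->]].
  by [].
apply: leq_trans H1 _.
have := card_Dlt; have := card_U.
move: #|Dlt| #|Uset| (nk v 1 ^ 2) (nk v 2) => a b c d Hb Ha.
apply: (@leq_trans (a * (2 * d))); first by rewrite leq_mul2l Hb orbT.
by rewrite mulnCA mulnA leq_mul2r Ha orbT.
Qed.

End C.

Lemma Ind1 N (g : {ffun 'I_N -> 'I_N}) (p : hpair N) : Ind [set p] g = inG g p.
Proof.
apply/forall_inP/idP => [H|H q]; first by apply: H; rewrite inE.
by rewrite inE => /eqP ->.
Qed.

Lemma Ind2 N (g : {ffun 'I_N -> 'I_N}) (p q : hpair N) : Ind [set p; q] g = inG g p && inG g q.
Proof.
apply/forall_inP/andP => [H|[H1 H2] r]; first by split; apply: H; rewrite !inE eqxx ?orbT.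
by rewrite !inE => /orP [] /eqP ->.
Qed.

Section F.
Variables (N n : nat) (v : 'I_N -> 'I_n) (R : realFieldType).
Local Open Scope ring_scope.

Lemma frac_aux (k : R) (a P Mn : nat) : 0 <= k -> Mn = (a * P)%N -> (0 < a)%N ->
  (Mn%:R)^-1 * (k * P%:R) <= k / a%:R.
Proof.
move=> Hk -> Ha; case: (posnP P) => [->|HP].
  by rewrite !mulr0 divr_ge0.
have HP' : (P%:R : R) != 0 by rewrite pnatr_eq0 -lt0n.
have Ha' : (a%:R : R) != 0 by rewrite pnatr_eq0 -lt0n.
have -> : ((a * P)%N%:R)^-1 * (k * P%:R) = k / a%:R :> R.
  by rewrite natrM; field; rewrite Ha' HP'.
by [].
Qed.

Lemma Eterm_ge0 al : 0 <= Eterm v R al.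
Proof.
rewrite /Eterm; apply: mulr_ge0; first by apply: mulr_ge0; rewrite invr_ge0.
apply: sumr_ge0 => g _; apply: sumr_ge0 => b _.
by apply: mulr_ge0; [apply: mulr_ge0 => //| ]; apply: sumr_ge0 => be _.
Qed.

Lemma E11 al : (3 < N)%N -> al \in Gamma11 v -> Eterm v R al <= 16%:R / (N - 1)%:R.
Proof.
move=> HN Hal.
have := @Eterm_le N n v R al 4 => H.
apply: le_trans (H _) _.
  by move=> g b Hm HI Hb; apply: F_bound11 => //; exact: matchingP.
move: Hal => /Gamma11P [s [t [H1 H2 H3 Eal]]].
have Hst : s != t by apply: contraTneq H3 => ->; rewrite ltnn.
rewrite (count11 Hst).
have -> : #|[set g in Mset N | Ind al g]| = #|[set g in Mset N | g s == t]|.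
  apply: eq_card => g; rewrite !inE Eal Ind1.
  by case: (boolP (is_matching g)) => // Hm; rewrite inG_mk //; apply: matchingP; rewrite inE.
by apply: frac_aux => //; rewrite subn_gt0; apply: leq_trans HN.
Qed.

Lemma E12 al : (3 < N)%N -> al \in Gamma12 v -> Eterm v R al <= 36%:R / ((N - 1) * (N - 3))%:R.
Proof.
move=> HN Hal.
have := @Eterm_le N n v R al 6 => H.
apply: le_trans (H _) _.
  by move=> g b Hm HI Hb; apply: F_bound12 => //; exact: matchingP.
move: Hal => /Gamma12P [s [t [u [w [H1 H2 H3 /and3P [Huw /eqP Hvuw Hu2] Eal]]]]].
have Hst : s != t by apply: contraTneq H3 => ->; rewrite ltnn.
have Hw2 : deg2 v w by rewrite /deg2 -Hvuw.
have Hsu := deg12 H1 Hu2; have Hsw := deg12 H1 Hw2.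
have Htu := deg12 H2 Hu2; have Htw := deg12 H2 Hw2.
have Hut : u != t by rewrite eq_sym.
rewrite (count12 Hsu Hst Hsw Hut Huw Htw).
have -> : #|[set g in Mset N | Ind al g]| = #|[set g in Mset N | (g s == u) && (g t == w)]|.
  apply: eq_card => g; rewrite !inE Eal Ind2.
  by case: (boolP (is_matching g)) => // Hm; rewrite !inG_mk //; apply: matchingP; rewrite inE.
apply: frac_aux => //; rewrite muln_gt0 !subn_gt0; apply/andP; split => //.
by apply: leq_trans HN.
Qed.

End F.

Section G.
Variable (R : realFieldType).
Local Open Scope ring_scope.

Lemma sum_setU_le (T : finType) (A B : {set T}) (F : T -> R) : (forall i, 0 <= F i) ->
  \sum_(i in A :|: B) F i <= \sum_(i in A) F i + \sum_(i in B) F i.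
Proof.
move=> HF.
rewrite big_mkcond [X in _ <= X + _]big_mkcond [X in _ <= _ + X]big_mkcond -big_split /=.
apply: ler_sum => i _; rewrite in_setU.
by case: (i \in A); case: (i \in B) => /=; rewrite ?addr0 ?add0r // lerDl.
Qed.

Lemma final_arith (g1 g2 m a b c : R) : 0 < b -> b <= a -> 0 <= m -> m / b <= c ->
  2 * g1 <= m ^+ 2 -> g2 <= m ^+ 3 ->
  g1 * (16 / a) + g2 * (36 / (a * b)) <= (8 * c + 36 * c ^+ 2) * m.
Proof.
move=> Hb Hba Hm Hc H1 H2.
have Ha : 0 < a by apply: lt_le_trans Hba.
have ia0 : 0 <= a^-1 by rewrite invr_ge0 ltW.
have ib0 : 0 <= b^-1 by rewrite invr_ge0 ltW.
have iab : a^-1 <= b^-1 by rewrite lef_pV2 ?posrE.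
have r0 : 0 <= m * b^-1 by rewrite mulr_ge0.
have rc : m * b^-1 <= c by [].
rewrite invfM.
have h1 : 2 * g1 * a^-1 <= m ^+ 2 * a^-1 by rewrite ler_wpM2r.
have h2 : m ^+ 2 * a^-1 <= m ^+ 2 * b^-1 by rewrite ler_wpM2l // exprn_ge0.
have h3 : m * (m * b^-1) <= m * c by rewrite ler_wpM2l.
have h5 : g2 * (a^-1 * b^-1) <= m ^+ 3 * (a^-1 * b^-1) by rewrite ler_wpM2r // mulr_ge0.
have h6 : m ^+ 3 * (a^-1 * b^-1) <= m ^+ 3 * (b^-1 * b^-1).
  by rewrite ler_wpM2l ?exprn_ge0 // ler_wpM2r.
have h7 : m * ((m * b^-1) * (m * b^-1)) <= m * (c * c).
  by rewrite ler_wpM2l // ler_pM.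
nra.
Qed.

End G.

Unset Implicit Arguments.

Theorem proposition4p9 (R : realFieldType) (N n : nat) (v : 'I_N -> 'I_n)
  (c : R) :
  ~~ odd N -> 3 < N ->
  ((maxn (nk v 1) (nk v 2))%:R / (N - 3)%:R <= c)%R ->
  (\sum_(al in Gamma1 v) Eterm v R al
     <= (8 * c + 36 * c ^+ 2) * (maxn (nk v 1) (nk v 2))%:R)%R.
Proof.
move=> _ HN Hc.
set m := maxn (nk v 1) (nk v 2) in Hc *.
apply: le_trans (sum_setU_le _ _ (@Eterm_ge0 N n v R)) _.
have S1 : (\sum_(al in Gamma11 v) Eterm v R al <= #|Gamma11 v|%:R * (16%:R / (N - 1)%:R))%R.
  apply: le_trans (ler_sum _ (fun al Hal => @E11 N n v R al HN Hal)) _.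
  by rewrite sumr_const [X in (_ <= X)%R]mulr_natl.
have S2 : (\sum_(al in Gamma12 v) Eterm v R al <=
     #|Gamma12 v|%:R * (36%:R / ((N - 1) * (N - 3))%:R))%R.
  apply: le_trans (ler_sum _ (fun al Hal => @E12 N n v R al HN Hal)) _.
  by rewrite sumr_const [X in (_ <= X)%R]mulr_natl.
apply: le_trans (lerD S1 S2) _.
rewrite natrM.
have H3 : (0 < N - 3)%N by rewrite subn_gt0.
apply: final_arith.
- by rewrite ltr0n.
- by rewrite ler_nat leq_sub2l.
- exact: ler0n.
- exact: Hc.
- have := card_G11 v; rewrite -(ler_nat R) natrM natrX => H; apply: le_trans H _.
  by rewrite expr2 [X in (_ <= X)%R]expr2; apply: ler_pM; rewrite ?ler0n // ler_nat leq_maxl.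
- have := card_G12 v; rewrite -(ler_nat R) natrM natrX => H; apply: le_trans H _.
  rewrite [X in (_ <= X)%R]exprSr; apply: ler_pM; rewrite ?exprn_ge0 ?ler0n //.
    by rewrite expr2 [X in (_ <= X)%R]expr2; apply: ler_pM; rewrite ?ler0n // ler_nat leq_maxl.
  by rewrite ler_nat leq_maxr.
Qed.
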